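(* Let $D$ be an essential domain admitting an essential representation $\mathcal V$ such that the set $\{\mathfrak m_V\cap D: V\in\mathcal V\}$ of centers in $D$ of the valuation domains in $\mathcal V$ (where $\mathfrak m_V$ is the maximal ideal of $V$) is closed in $\operatorname{Spec}(D)$ with respect to the constructible topology. Then $D$ is a PvMD.
   Context: All rings are commutative with identity. For an integral domain $D$ with quotient field $K$ and a nonzero fractional ideal $I$, set $(D:I)=\{x\in K: xI\subseteq D\}$, $I^v=(D:(D:I))$, $I^t=\bigcup\{J^v: J\subseteq I \text{ finitely generated}\}$; $I$ is a $t$-ideal if $I=(0)$ or $I=I^t$; a $t$-maximal ideal is a $t$-ideal maximal among proper $t$-ideals. $D$ is a PvMD if $D_{\mathfrak m}$ is a valuation domain for every $t$-maximal ideal $\mathfrak m$. A valuation overring of $D$ is essential if it equals $D_{\mathfrak p}$ for some prime $\mathfrak p$; an essential representation of $D$ is a family of essential valuation overrings of $D$ with intersection $D$; $D$ is essential if it has one. The constructible topology on $\operatorname{Spec}(A)$ is the coarsest topology in which every $D(f)=\{\mathfrak p:f\notin\mathfrak p\}$ is clopen. *)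

(* Defs.v *)
(* An integral domain D is modelled as a subring of a field K
   which is its quotient field; ideals / fractional ideals / overrings are
   Prop-valued subsets of K. *)
From HB Require Import structures.
From mathcomp Require Import all_boot all_order all_algebra.
Set Implicit Arguments. Unset Strict Implicit. Unset Printing Implicit Defensive.
Import GRing.Theory.
Local Open Scope ring_scope.

Section Defs.
Variable K : fieldType.
Implicit Types (D I J P V : K -> Prop).

Definition subring D : Prop :=
  D 0 /\ D 1 /\ (forall x y, D x -> D y -> D (x - y)) /\
  (forall x y, D x -> D y -> D (x * y)).

Definition quotient_field_of D : Prop :=
  forall x : K, exists a b, D a /\ D b /\ b != 0 /\ x = a / b.

Definition domain_with_qf D : Prop := subring D /\ quotient_field_of D.

Definition is_ideal D I : Prop :=
  (forall x, I x -> D x) /\ I 0 /\ (forall x y, I x -> I y -> I (x + y)) /\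
  (forall d x, D d -> I x -> I (d * x)).

Definition prime_ideal D P : Prop :=
  is_ideal D P /\ ~ P 1 /\ (forall a b, D a -> D b -> P (a * b) -> P a \/ P b).

Definition colon D I : K -> Prop := fun x => forall y, I y -> D (x * y).
Definition vop D I : K -> Prop := colon D (colon D I).

Fixpoint span D (l : seq K) (x : K) : Prop :=
  match l with
  | [::] => x = 0
  | a :: l' => exists d y, D d /\ span D l' y /\ x = d * a + y
  end.

Definition top D I : K -> Prop :=
  fun x => exists l : seq K, (forall a, a \in l -> I a) /\ vop D (span D l) x.

Definition t_ideal D I : Prop :=
  (forall x, I x <-> x = 0) \/ (forall x, I x <-> top D I x).

Definition proper_ideal D I : Prop := is_ideal D I /\ exists x, D x /\ ~ I x.

Definition t_maximal D M : Prop :=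
  proper_ideal D M /\ t_ideal D M /\
  (forall J, proper_ideal D J -> t_ideal D J ->
     (forall x, M x -> J x) -> forall x, J x -> M x).

Definition loc D P : K -> Prop :=
  fun x => exists a s, D a /\ D s /\ s != 0 /\ ~ P s /\ x = a / s.

Definition valuation_domain V : Prop :=
  subring V /\ forall x : K, x != 0 -> V x \/ V x^-1.

Definition PvMD D : Prop :=
  forall M, t_maximal D M -> valuation_domain (loc D M).

Definition essential_valuation_overring D V : Prop :=
  valuation_domain V /\ (forall x, D x -> V x) /\
  exists p, prime_ideal D p /\ forall x, V x <-> loc D p x.

Definition essential_representation D (I : Type) (Vs : I -> K -> Prop) : Prop :=
  (forall i, essential_valuation_overring D (Vs i)) /\
  (forall x, D x <-> forall i, Vs i x).

Definition max_ideal V : K -> Prop := fun x => V x /\ ~ (x != 0 /\ V x^-1).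

Definition center D V : K -> Prop := fun x => D x /\ max_ideal V x.

(* Constructible topology on Spec(D): generated by the subbasis
   D(f), V(f) = Spec(D) \ D(f) (f in D); its basic opens are finite
   intersections of these. *)
Definition basic_open D (fs gs : seq K) (Q : K -> Prop) : Prop :=
  prime_ideal D Q /\ (forall f, f \in fs -> ~ Q f) /\ (forall g, g \in gs -> Q g).

Definition constructible_closed D (S : (K -> Prop) -> Prop) : Prop :=
  (forall Q, S Q -> prime_ideal D Q) /\
  forall P, prime_ideal D P -> ~ S P ->
    exists fs gs : seq K, (forall f, f \in fs -> D f) /\ (forall g, g \in gs -> D g) /\
      basic_open D fs gs P /\ (forall Q, basic_open D fs gs Q -> ~ S Q).

Definition centers D (I : Type) (Vs : I -> K -> Prop) : (K -> Prop) -> Prop :=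
  fun Q => exists i, forall x, Q x <-> center D (Vs i) x.

End Defs.

(* Main.v *)
Require Import Defs.
From mathcomp Require Import all_boot all_order all_algebra.
From mathcomp Require classical_sets.
From mathcomp Require Import ring.
From Stdlib Require Import Classical FunctionalExtensionality PropExtensionality.
Set Implicit Arguments. Unset Strict Implicit. Unset Printing Implicit Defensive.
Import GRing.Theory.
Local Open Scope ring_scope.

Lemma zorn_sets (T:Type) (P : (T->Prop) -> Prop) :
 (forall F : (T->Prop)->Prop, (forall X, F X -> P X) ->
    (forall X Y, F X -> F Y -> (forall t, X t -> Y t) \/ (forall t, Y t -> X t)) ->
    P (fun t => exists2 X, F X & X t)) ->
 exists A, P A /\ forall B, (forall t, A t -> B t) -> (exists t, B t /\ ~ A t) -> ~ P B.
Proof.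
move=> H.
have [|A [PA Amax]] := @classical_sets.Zorn_bigcup T P.
  move=> F FP Ftot; exact: (H F FP Ftot).
exists A; split => // B AB [t [Bt nAt]] PB.
apply: (Amax B) => //; split => // BA; apply: nAt; exact: BA.
Qed.

Section Basics.
Variable K : fieldType.
Variable D : K -> Prop.
Hypothesis hD : subring D.

Lemma D0 : D 0. Proof. by case: hD. Qed.
Lemma D1 : D 1. Proof. by case: hD => _ []. Qed.
Lemma DB x y : D x -> D y -> D (x - y). Proof. by case: hD => _ [_ [h _]]; apply: h. Qed.
Lemma DM x y : D x -> D y -> D (x * y). Proof. by case: hD => _ [_ [_ h]]; apply: h. Qed.
Lemma DN y : D y -> D (- y).
Proof. by move=> Dy; rewrite -sub0r; apply: DB => //; exact: D0. Qed.
Lemma DD x y : D x -> D y -> D (x + y).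
Proof. by move=> Dx Dy; rewrite -[y]opprK; apply: DB => //; exact: DN. Qed.

Lemma span0 l : Defs.span D l 0.
Proof.
elim: l => [|b l IH] //=; exists 0, 0; split; first exact: D0.
by split => //; rewrite mul0r addr0.
Qed.

Lemma span_sub l : (forall a, a \in l -> D a) -> forall x, Defs.span D l x -> D x.
Proof.
elim: l => [|a l IH] /= Hl x.
  by move=> ->; exact: D0.
move=> [d [y [Dd [sy ->]]]]; apply: DD.
  by apply: DM => //; apply: Hl; rewrite inE eqxx.
by apply: IH sy => b bl; apply: Hl; rewrite inE bl orbT.
Qed.

Lemma span_mem l a : a \in l -> Defs.span D l a.
Proof.
elim: l => [|b l IH] //=; rewrite inE => /orP [/eqP ->|al].
  exists 1, 0; split; first exact: D1.
  by split; [exact: span0 | rewrite mul1r addr0].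
exists 0, a; split; first exact: D0.
by split; [exact: IH | rewrite mul0r add0r].
Qed.

Lemma span_scale a l x : Defs.span D l x -> Defs.span D (map (fun b => a * b) l) (a * x).
Proof.
elim: l x => [|b l IH] x /=.
  by move=> ->; rewrite mulr0.
move=> [d [y [Dd [sy ->]]]]; exists d, (a * y); split => //; split; first exact: IH.
by rewrite mulrDr mulrCA.
Qed.

Lemma top_self (J : K -> Prop) x : J x -> top D J x.
Proof.
move=> Jx; exists [:: x]; split.
  by move=> a; rewrite inE => /eqP ->.
move=> y Hy; rewrite mulrC; apply: Hy; apply: span_mem; by rewrite inE eqxx.
Qed.

Lemma top_subD (J : K -> Prop) x : (forall a, J a -> D a) -> top D J x -> D x.
Proof.
move=> JD [l [lJ hv]]; rewrite -[x]mulr1; apply: hv => z sz.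
rewrite mul1r; apply: span_sub sz => a al; apply: JD; exact: lJ.
Qed.

Lemma center_iff V p : prime_ideal D p -> (forall x, V x <-> loc D p x) ->
  forall x, center D V x <-> p x.
Proof.
move=> [[pD [p0 [pA pM]]] [np1 pP]] hV x; split.
- move=> [Dx [Vx nu]]; apply: NNPP => npx; apply: nu; split.
    by apply/eqP => x0; apply: npx; rewrite x0.
  apply/hV; exists 1, x; split; first exact: D1.
  split => //; split; first by apply/eqP => x0; apply: npx; rewrite x0.
  by split => //; rewrite div1r.
- move=> px; have Dx := pD _ px; split => //; split.
    apply/hV; exists x, 1; split => //; split; first exact: D1.
    by split; [exact: oner_neq0 | split => //; rewrite divr1].
  move=> [xn0 /hV [a [s [Da [Ds [sn0 [nps e]]]]]]]; apply: nps.
  have -> : s = a * x.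
    have h : x * x^-1 = 1 by rewrite mulfV.
    rewrite e in h.
    have -> : s = s * (x * (a / s)) by rewrite h mulr1.
    field; exact: sn0.
  by apply: pM.
Qed.

Lemma subring_loc M : is_ideal D M -> ~ M 1 ->
  (forall a b, D a -> D b -> M (a * b) -> M a \/ M b) -> subring (loc D M).
Proof.
move=> [MD [M0 [MA MM]]] nM1 Mp.
have nMst s t : D s -> D t -> ~ M s -> ~ M t -> ~ M (s * t).
  by move=> Ds Dt ns nt /(Mp _ _ Ds Dt) [].
split; first by exists 0, 1; do !split => //; [exact: D0 | exact: D1 | exact: oner_neq0 | rewrite mul0r].
split; first by exists 1, 1; do !split => //; [exact: D1 | exact: D1 | exact: oner_neq0 | rewrite divr1].
split.
  move=> x y [a [s [Da [Ds [s0 [ns ->]]]]]] [b [t [Db [Dt [t0 [nt ->]]]]]].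
  exists (a * t - b * s), (s * t); split; first by apply: DB; apply: DM.
  split; first exact: DM.
  split; first by rewrite mulf_neq0.
  split; first exact: nMst.
  field; by rewrite ?s0 ?t0.
move=> x y [a [s [Da [Ds [s0 [ns ->]]]]]] [b [t [Db [Dt [t0 [nt ->]]]]]].
exists (a * b), (s * t); split; first exact: DM.
split; first exact: DM.
split; first by rewrite mulf_neq0.
split; first exact: nMst.
field; by rewrite ?s0 ?t0.
Qed.

End Basics.

Section Compact.
Variable K : fieldType.
Variable D : K -> Prop.
Hypothesis hD : subring D.
Variables (I : Type) (Vs : I -> K -> Prop).
Hypothesis hE : essential_representation D Vs.
Hypothesis hC : constructible_closed D (centers D Vs).

Lemma C_prime i : prime_ideal D (center D (Vs i)).
Proof.
have [_ [_ [p [pp hp]]]] := hE.1 i.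
have -> : center D (Vs i) = p.
  apply: functional_extensionality => x; apply: propositional_extensionality.
  exact: center_iff.
exact: pp.
Qed.

Variable M : K -> Prop.
Hypothesis MD : forall x, M x -> D x.
Hypothesis hfin : forall s : seq K, (forall x, x \in s -> M x) ->
  exists i, forall x, x \in s -> center D (Vs i) x.

Let C i := center D (Vs i).
Let ext (X : bool * K -> Prop) (p : bool * K) := X p \/ (p.1 /\ M p.2).
Let good i (p : bool * K) := if p.1 then C i p.2 else ~ C i p.2.
Let P X := (forall p, X p -> D p.2) /\
  forall s : seq (bool * K), (forall p, p \in s -> ext X p) ->
    exists i, forall p, p \in s -> good i p.

Lemma Pempty X : (forall q, ~ X q) -> P X.
Proof.
move=> nX; split; first by move=> q /nX.
move=> s hs.
have [|i hi] := @hfin [seq q.2 | q <- s].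
  move=> x /mapP [q qs ->]; case: (hs q qs) => [/nX //|[]] //.
exists i => q qs; rewrite /good.
case: (hs q qs) => [/nX //|[-> _]].
by apply: hi; apply/mapP; exists q.
Qed.

Lemma compact : exists i, forall x, M x -> C i x.
Proof.
have [|A [PA maxA]] := @zorn_sets (bool * K) P.
  move=> F FP Ftot; split.
    by move=> q [X FX Xq]; apply: (FP X FX).1.
  have cl : forall s : seq (bool * K),
      (forall p, p \in s -> ext (fun t => exists2 X, F X & X t) p) ->
      exists X0, (F X0 \/ forall q, ~ X0 q) /\ forall p, p \in s -> ext X0 p.
    elim => [|q s IH] hs.
      exists (fun _ => False); split; [by apply: or_intror => q [] | by move=> p].
    have [|X0 [hX0 cov]] := IH.
      by move=> p ps; apply: hs; rewrite inE ps orbT.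
    have hq : ext (fun t => exists2 X, F X & X t) q by apply: hs; rewrite inE eqxx.
    case: hq => [[X FX Xq]|hM].
      case: hX0 => [FX0|eX0].
        case: (Ftot X X0 FX FX0) => [sub|sub].
          exists X0; split; first by left.
          move=> p; rewrite inE => /orP [/eqP ->|ps]; first by left; apply: sub.
          exact: cov.
        exists X; split; first by left.
        move=> p; rewrite inE => /orP [/eqP ->|ps]; first by left.
        by case: (cov p ps) => [/sub|]; [left|right].
      exists X; split; first by left.
      move=> p; rewrite inE => /orP [/eqP ->|ps]; first by left.
      by case: (cov p ps) => [/eX0|]; [|right].
    exists X0; split => //.
    move=> p; rewrite inE => /orP [/eqP ->|ps]; first by right.
    exact: cov.
  move=> s hs; have [X0 [[FX0|eX0] cov]] := cl s hs.
    exact: (FP X0 FX0).2.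
  exact: (Pempty eX0).2.
pose Q x := ext A (true, x).
have QD x : Q x -> D x by case=> [/(PA.1 _)|[] _ /MD].
have fip := PA.2.
have excl x : Q x -> A (false, x) -> False.
  move=> Qx Af; have [|i hi] := fip [:: (true, x); (false, x)].
    by move=> p; rewrite !inE => /orP [/eqP ->|/eqP ->] //; left.
  have h1 := hi (true, x); have h2 := hi (false, x).
  rewrite /good /= in h1 h2; apply: h2; first by rewrite !inE eqxx orbT.
  by apply: h1; rewrite inE eqxx.
have dich x : D x -> Q x \/ A (false, x).
  move=> Dx; apply: NNPP => hn.
  have nQ : ~ Q x by move=> h; apply: hn; left.
  have nAf : ~ A (false, x) by move=> h; apply: hn; right.
  have bad q : ext A q -> q.2 = x -> False.
    case: q => [[] y] [Aq|[/= b My]] /= yx; subst y => //.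
    - by apply: nQ; left.
    - by apply: nQ; right.
  pose B1 q := A q \/ q = (true, x).
  pose B2 q := A q \/ q = (false, x).
  have nP1 : ~ P B1.
    apply: maxA; first by move=> t At; left.
    by exists (true, x); split; [right | move=> h; apply: nQ; left].
  have nP2 : ~ P B2.
    apply: maxA; first by move=> t At; left.
    by exists (false, x); split; [right | ].
  have DB1 : forall q, B1 q -> D q.2 by move=> q [/(PA.1 _)|->].
  have DB2 : forall q, B2 q -> D q.2 by move=> q [/(PA.1 _)|->].
  apply: nP1; split => // s1 cov1; apply: NNPP => h1.
  apply: nP2; split => // s2 cov2; apply: NNPP => h2.
  have [|i hi] := fip [seq q <- s1 ++ s2 | q.2 != x].
    move=> p; rewrite mem_filter mem_cat => /andP [px /orP [ps|ps]].
      case: (cov1 p ps) => [[Ap|ep]|hM]; [by left| |by right].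
      by rewrite ep eqxx in px.
    case: (cov2 p ps) => [[Ap|ep]|hM]; [by left| |by right].
    by rewrite ep eqxx in px.
  have [Cx|nCx] := classic (C i x).
    apply: h1; exists i => p ps.
    have [px|] := boolP (p.2 != x).
      by apply: hi; rewrite mem_filter px mem_cat ps.
    move/negPn/eqP => px.
    case: (cov1 p ps) => [[Ap|ep]|hM].
    - by case: (bad p (or_introl Ap) px).
    - by rewrite ep /good.
    - by case: (bad p (or_intror hM) px).
  apply: h2; exists i => p ps.
  have [px|] := boolP (p.2 != x).
    by apply: hi; rewrite mem_filter px mem_cat ps orbT.
  move/negPn/eqP => px.
  case: (cov2 p ps) => [[Ap|ep]|hM].
  - by case: (bad p (or_introl Ap) px).
  - by rewrite ep /good.
  - by case: (bad p (or_intror hM) px).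
have notQ x : D x -> ~ Q x -> A (false, x).
  by move=> Dx nQ; case: (dich x Dx).
have Q0 : Q 0.
  apply: NNPP => nQ0.
  have [|i hi] := fip [:: (false, 0)].
    by move=> p; rewrite inE => /eqP ->; left; exact: (notQ 0 (D0 hD) nQ0).
  have := hi (false, 0); rewrite /good /= inE eqxx => /(_ isT); apply.
  by case: (C_prime i) => [[_ [h _]] _].
have QA : forall x y, Q x -> Q y -> Q (x + y).
  move=> x y Qx Qy; apply: NNPP => nQ.
  have Dxy : D (x + y) by apply: (DD hD); apply: QD.
  have [|i hi] := fip [:: (true, x); (true, y); (false, x + y)].
    move=> p; rewrite !inE => /orP [/eqP ->|/orP [/eqP ->|/eqP ->]] //.
    by left; apply: notQ.
  have h1 := hi (true, x); have h2 := hi (true, y); have h3 := hi (false, x + y).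
  rewrite /good /= !inE !eqxx ?orbT in h1 h2 h3.
  apply: h3 => //; case: (C_prime i) => [[_ [_ [h _]]] _]; apply: h.
  - exact: h1.
  - exact: h2.
have QM : forall d x, D d -> Q x -> Q (d * x).
  move=> d x Dd Qx; apply: NNPP => nQ.
  have Ddx : D (d * x) by apply: (DM hD) => //; apply: QD.
  have [|i hi] := fip [:: (true, x); (false, d * x)].
    move=> p; rewrite !inE => /orP [/eqP ->|/eqP ->] //.
    by left; apply: notQ.
  have h1 := hi (true, x); have h3 := hi (false, d * x).
  rewrite /good /= !inE !eqxx ?orbT in h1 h3.
  apply: h3 => //; case: (C_prime i) => [[_ [_ [_ h]]] _]; apply: h => //.
  exact: h1.
have nQ1 : ~ Q 1.
  move=> Q1; have [|i hi] := fip [:: (true, 1)].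
    by move=> p; rewrite inE => /eqP ->.
  have := hi (true, 1); rewrite /good /= inE eqxx => /(_ isT).
  by case: (C_prime i) => [_ [h _]].
have QP : forall a b, D a -> D b -> Q (a * b) -> Q a \/ Q b.
  move=> a b Da Db Qab; apply: NNPP => hn.
  have nQa : ~ Q a by move=> h; apply: hn; left.
  have nQb : ~ Q b by move=> h; apply: hn; right.
  have [|i hi] := fip [:: (true, a * b); (false, a); (false, b)].
    move=> p; rewrite !inE => /orP [/eqP ->|/orP [/eqP ->|/eqP ->]] //;
    by left; apply: notQ.
  have h1 := hi (true, a * b); have h2 := hi (false, a); have h3 := hi (false, b).
  rewrite /good /= !inE !eqxx ?orbT in h1 h2 h3.
  case: (C_prime i) => [_ [_ h]].
  by case: (h a b Da Db (h1 isT)); [apply: h2 | apply: h3].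
have Qprime : prime_ideal D Q.
  split; first by split; [exact: QD | split; [exact: Q0 | split; [exact: QA | exact: QM]]].
  by split; [exact: nQ1 | exact: QP].
have [i hi] : centers D Vs Q.
  apply: NNPP => nc.
  have [fs [gs [fsD [gsD [[_ [fQ gQ]] hdis]]]]] := hC.2 Q Qprime nc.
  have [|i hi] := fip ([seq (true, g) | g <- gs] ++ [seq (false, f) | f <- fs]).
    move=> p; rewrite mem_cat => /orP [/mapP [g gi ->]|/mapP [f fi ->]].
      exact: gQ.
    by left; apply: notQ; [apply: fsD | apply: fQ].
  apply: (hdis (C i)); last by exists i.
  split; first exact: C_prime.
  split.
    move=> f fi; have := hi (false, f); rewrite /good /=; apply.
    by rewrite mem_cat; apply/orP; right; apply/mapP; exists f.
  move=> g gi; have := hi (true, g); rewrite /good /=; apply.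
  by rewrite mem_cat; apply/orP; left; apply/mapP; exists g.
exists i => x Mx; apply/hi; by right.
Qed.

End Compact.

Theorem corollary2p5 (K : fieldType) (D : K -> Prop) (I : Type) (Vs : I -> K -> Prop) :
  domain_with_qf D ->
  essential_representation D Vs ->
  constructible_closed D (centers D Vs) ->
  PvMD D.
Proof.
move=> [hD hqf] hE hC M [[MI nMx] [tM maxM]].
have [MD [M0 [MA MMul]]] := MI.
have nM1 : ~ M 1.
  move=> M1; case: nMx => x [Dx nx]; apply: nx; rewrite -[x]mulr1; exact: MMul.
case: tM => [Mz|Mt].
  have all x : loc D M x.
    have [a [b [Da [Db [b0 e]]]]] := hqf x.
    exists a, b; do !split => //.
    by move/Mz => b0'; rewrite b0' eqxx in b0.
  split; first by split; [apply: all | split; [apply: all | split => *; apply: all]].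
  by move=> x _; left; apply: all.
have Mp : forall a b, D a -> D b -> M (a * b) -> M a \/ M b.
  move=> a b Da Db Mab; case: (classic (M a)) => [Ma|nMa]; [by left | right].
  pose J x := D x /\ M (a * x).
  have JI : Defs.proper_ideal D J.
    split; last by exists 1; split; [exact: D1 | move=> [_]; rewrite mulr1].
    split; first by move=> x [].
    split; first by split; [exact: D0 | rewrite mulr0].
    split.
      move=> x y [Dx Mx] [Dy My]; split; first exact: DD.
      by rewrite mulrDr; apply: MA.
    move=> d x Dd [Dx Mx]; split; first exact: DM.
    by rewrite mulrCA; apply: MMul.
  have Jt : Defs.t_ideal D J.
    right => x; split; first exact: top_self.
    move=> hx; split; first by apply: (top_subD hD) hx => y [].
    apply/Mt; case: hx => l [lJ hv].
    exists (map (fun b => a * b) l); split.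
      by move=> c /mapP [y yl ->]; exact: (lJ y yl).2.
    move=> y hy.
    have h : D (x * (y * a)).
      apply: hv => z sz; rewrite -mulrA; apply: hy; exact: span_scale.
    by have -> : a * x * y = x * (y * a) by ring.
  have MJ : forall x, M x -> J x by move=> x Mx; split; [exact: MD | exact: MMul].
  exact: (maxM J JI Jt MJ b (conj Db Mab)).
have hfin : forall s : seq K, (forall x, x \in s -> M x) ->
    exists i, forall x, x \in s -> center D (Vs i) x.
  move=> s sM; apply: NNPP => hn; apply: nM1; apply/Mt.
  exists s; split => // y hy; rewrite mul1r; apply/hE.2 => i.
  have [x [xs nc]] : exists x, x \in s /\ ~ center D (Vs i) x.
    apply: NNPP => h; apply: hn; exists i => x xs; apply: NNPP => nc.
    by apply: h; exists x.
  have [[[_ [_ [_ VM]]] _] [Vsub _]] := hE.1 i.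
  have Dx := MD _ (sM x xs).
  have Vx := Vsub x Dx.
  have [x0 Vix] : x != 0 /\ Vs i x^-1.
    by apply: NNPP => h; apply: nc; split => //; split.
  have Vyx : Vs i (y * x) by apply: Vsub; apply: hy; apply: span_mem.
  have -> : y = (y * x) * x^-1 by rewrite -mulrA mulfV // mulr1.
  exact: VM.
have [i hi] := compact hD hE hC MD hfin.
split; first exact: subring_loc.
move=> x x0.
have [[Vsr Vval] [Vsub [p [pp hp]]]] := hE.1 i.
have sub z : Vs i z -> loc D M z.
  move=> /hp [a [s [Da [Ds [s0 [nps ->]]]]]].
  exists a, s; do !split => //.
  by move=> Ms; apply: nps; apply/(center_iff hD pp hp); apply: hi.
by case: (Vval x x0) => h; [left | right]; apply: sub.
Qed.
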